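(* For all integers $m\ge1$, $K(2^m,4)\neq K(2^m,1,1)$. Moreover, if $m<14$ then $K(2^m,4)<K(2^m,1,1)$, and if $m\ge 14$ then $K(2^m,4)>K(2^m,1,1)$.
   Context: $2^m$ denotes the list $2,2,\ldots,2$ ($m$ entries). For a list $(c_1,\ldots,c_k)$ of positive integers with even sum and $n=\frac12(c_1+\cdots+c_k+2)$, $K(c_1,\ldots,c_k)$ is the number of Young tableaux of shape $(n-1,n-1)$ and content $(c_1,\ldots,c_k)$: two-rowed arrays of integers, each row of length $n-1$, weakly increasing along rows, strictly increasing down columns, with exactly $c_i$ occurrences of $i$ for each $i$ (this number is $0$ if no such tableau exists). *)

(* Defs.v *)
From mathcomp Require Import all_boot.
Set Implicit Arguments. Unset Strict Implicit. Unset Printing Implicit Defensive.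

(* A content c = (c_1,...,c_k) is a seq nat; the entry value i+1 is represented
   by the ordinal i : 'I_k, so c_(i+1) = nth 0 c i.  For even sum, n-1 = (sum c)/2. *)

Definition rowlen (c : seq nat) : nat := (sumn c)./2.

Definition is_tableau (c : seq nat)
  (t : (rowlen c).-tuple 'I_(size c) * (rowlen c).-tuple 'I_(size c)) : bool :=
  let: (r1, r2) := t in
  [&& sorted (fun a b : 'I_(size c) => (a <= b)%N) r1,
      sorted (fun a b : 'I_(size c) => (a <= b)%N) r2,
      [forall j : 'I_(rowlen c), (tnth r1 j < tnth r2 j)%N] &
      [forall i : 'I_(size c), count_mem i r1 + count_mem i r2 == nth 0 c i]].

Definition K (c : seq nat) : nat := #|[pred t | @is_tableau c t]|.

(* Main.v *)
From Stdlib Require Import ZArith Lia.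
Require Import Defs.
From mathcomp Require Import all_boot.
From mathcomp Require Import zify.
Set Implicit Arguments. Unset Strict Implicit. Unset Printing Implicit Defensive.

Fixpoint valid (c x : seq nat) (a b L : nat) : bool :=
  match c, x with
  | [::], [::] => (a == L) && (b == L)
  | ci :: c', xi :: x' => [&& xi <= ci, b + xi <= a & valid c' x' (a + (ci - xi)) (b + xi) L]
  | _, _ => false end.

Fixpoint gen (c : seq nat) (a b L : nat) : seq (seq nat) :=
  match c with
  | [::] => if (a == L) && (b == L) then [:: [::]] else [::]
  | ci :: c' => [seq x :: s | x <- [seq x <- iota 0 ci.+1 | b + x <= a],
                              s <- gen c' (a + (ci - x)) (b + x) L]
  end.

Lemma mem_gen c : forall s a b L, (s \in gen c a b L) = valid c s a b L.
Proof.
elim: c => [|ci c IH] s a b L.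
  by case: s => [|z s] /=; case: ifP => _ //=; rewrite ?inE.
have -> : gen (ci :: c) a b L = [seq x :: s | x <- [seq x <- iota 0 ci.+1 | b + x <= a], s <- gen c (a + (ci - x)) (b + x) L] by [].
apply/allpairsPdep/idP.
  move=> [x [s' [Hx Hs ->]]]; move: Hx; rewrite mem_filter mem_iota => /andP[H1 H2] /=.
  by rewrite H1 -IH Hs !andbT; case/andP: H2 => _; rewrite add0n ltnS.
case: s => [|x s] //; rewrite [valid _ _ _ _ _]/= => /and3P[H1 H2 H3]; exists x, s; split => //.
  by rewrite mem_filter mem_iota H2 /= ltnS H1.
by rewrite IH.
Qed.

Lemma uniq_gen c : forall a b L, uniq (gen c a b L).
Proof.
elim: c => [|ci c IH] a b L; first by rewrite /=; case: ifP.
have -> : gen (ci :: c) a b L = [seq x :: s | x <- [seq x <- iota 0 ci.+1 | b + x <= a], s <- gen c (a + (ci - x)) (b + x) L] by [].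
apply: allpairs_uniq_dep.
- by apply: filter_uniq; apply: iota_uniq.
- by move=> x _; apply: IH.
by move=> [x s] [y t] _ _ /= [-> ->].
Qed.

Definition Pref (x y : seq nat) (a b : nat) :=
  forall v, v < size x -> b + sumn (take v.+1 x) <= a + sumn (take v y).

Lemma valid_char c : forall x y a b L, size x = size c -> size y = size c ->
  (forall i, nth 0 x i + nth 0 y i = nth 0 c i) ->
  valid c x a b L <-> [/\ Pref x y a b, a + sumn y = L & b + sumn x = L].
Proof.
elim: c => [|ci c IH] [|xi x] [|yi y] a b L //= Hx Hy H.
  rewrite !addn0; split; first by case/andP => /eqP -> /eqP ->.
  by case=> _ -> ->; rewrite !eqxx.
case: Hx => Hx; case: Hy => Hy.
have H0 := H 0; rewrite /= in H0.
have HS : forall i, nth 0 x i + nth 0 y i = nth 0 c i by move=> i; exact: (H i.+1).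
have -> : ci - xi = yi by rewrite -H0 addKn.
have -> : xi <= ci by rewrite -H0 leq_addr.
have IH' := IH x y (a + yi) (b + xi) L Hx Hy HS.
rewrite /=; split.
  case/andP => Hb /IH' [HP Ha Hb'].
  split; [|lia|lia].
  move=> [|v] /= Hv; first by rewrite take0 /= !addn0.
  by rewrite !addnA; apply: HP; rewrite -ltnS.
case=> HP Ha Hb; apply/andP; split.
  by have := HP 0 isT; rewrite /= take0 /= !addn0.
apply/IH'; split; [|lia|lia].
by move=> v Hv; have := HP v.+1 Hv; rewrite /= !addnA.
Qed.

Lemma count_ltS (R : seq nat) n :
  count (fun z => z < n.+1) R = count (fun z => z < n) R + count_mem n R.
Proof.
elim: R => //= z R ->; rewrite ltnS.
case: (ltngtP z n) => H; lia.
Qed.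

Lemma cnt_sum (R : seq nat) n :
  sumn [seq count_mem i R | i <- iota 0 n] = count (fun z => z < n) R.
Proof.
elim: n => [|n IH].
  by rewrite /= (@eq_count _ _ pred0) ?count_pred0 // => z; rewrite ltn0.
by rewrite -addn1 iotaD map_cat sumn_cat IH /= addn0 add0n addn1 count_ltS.
Qed.

Lemma strict1 (R1 R2 : seq nat) : size R1 = size R2 ->
  (forall j, j < size R1 -> nth 0 R1 j < nth 0 R2 j) ->
  forall v, count (fun z => z <= v) R2 <= count (fun z => z < v) R1.
Proof.
elim: R1 R2 => [|z1 R1 IH] [|z2 R2] //= [Hs] H v.
have H0 := H 0 isT; rewrite /= in H0.
have := IH R2 Hs (fun j Hj => H j.+1 Hj) v.
case: (leqP z2 v) => Hz; case: (ltnP z1 v) => Hz' //=; lia.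
Qed.

Lemma sorted_a (s : seq nat) j v : sorted leq s -> j < size s -> v <= nth 0 s j ->
  count (fun z => z < v) s <= j.
Proof.
elim: s j => [|z s IH] j //= Hp.
have Hall := order_path_min leq_trans Hp.
have Hs := path_sorted Hp.
case: j => [|j] /= Hj Hv.
  have : ~~ has (fun y => y < v) s.
    by apply/hasPn => y Hy; rewrite -leqNgt; exact: (leq_trans Hv (allP Hall y Hy)).
  by rewrite has_count -leqNgt leqn0 => /eqP ->; rewrite ltnNge Hv.
have := IH j Hs Hj Hv; case: (z < v) => /=; lia.
Qed.

Lemma sorted_b (s : seq nat) j : sorted leq s -> j < size s ->
  j < count (fun z => z <= nth 0 s j) s.
Proof.
elim: s j => [|z s IH] j //= Hp.
have Hall := order_path_min leq_trans Hp.
have Hs := path_sorted Hp.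
case: j => [|j] /= Hj; first by rewrite leqnn.
have Hin : nth 0 s j \in s by apply: mem_nth.
by rewrite (allP Hall _ Hin) /= add1n ltnS; apply: IH.
Qed.

Lemma strict2 (R1 R2 : seq nat) : sorted leq R1 -> sorted leq R2 -> size R1 = size R2 ->
  (forall v, count (fun z => z <= v) R2 <= count (fun z => z < v) R1) ->
  forall j, j < size R1 -> nth 0 R1 j < nth 0 R2 j.
Proof.
move=> S1 S2 Hs H j Hj; rewrite ltnNge; apply/negP => Hle.
have A := sorted_a S1 Hj Hle.
have B := sorted_b S2 (leq_trans Hj (eq_leq Hs)).
have := H (nth 0 R2 j); lia.
Qed.

Fixpoint row (f : nat -> nat) (k : nat) : seq nat :=
  if k is k'.+1 then row f k' ++ nseq (f k') k' else [::].

Lemma path_nseq n x : path leq x (nseq n x).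
Proof. by elim: n => //= n ->; rewrite leqnn. Qed.

Lemma sorted_cat_nseq (s : seq nat) n x : sorted leq s -> all (fun z => z <= x) s ->
  sorted leq (s ++ nseq n x).
Proof.
elim: s => [|z s IH] /=; first by move=> _ _; case: n => // n; exact: path_nseq.
rewrite !path_sortedE; try exact: leq_trans.
case/andP => Hz Hs /andP [Hzx Hall].
rewrite all_cat Hz IH // andbT /= all_nseq.
by apply/orP; right.
Qed.

Lemma row_all f k : all (fun z => z < k) (row f k).
Proof.
elim: k => //= k IH; rewrite all_cat all_nseq ltnSn orbT andbT.
by apply: sub_all IH => z /= /ltnW.
Qed.

Lemma row_sorted f k : sorted leq (row f k).
Proof.
elim: k => //= k IH; apply: sorted_cat_nseq => //.
by apply: sub_all (row_all f k) => z /= /ltnW.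
Qed.

Lemma row_count f k v : count_mem v (row f k) = if v < k then f v else 0.
Proof.
elim: k => [|k IH] //=; rewrite count_cat IH count_nseq /=.
case: ifP => H1; case: ifP => H2; case: eqP => H3; subst; rewrite ?ltnn ?ltnSn in H1 H2 *; lia.
Qed.

Lemma valid_le c : forall x a b L, valid c x a b L ->
  size x = size c /\ forall i, nth 0 x i <= nth 0 c i.
Proof.
elim: c => [|ci c IH] [|xi x] a b L //=.
case/and3P => H1 _ /IH [-> H]; split => // -[|i] //=.
Qed.

Section Bij.
Variable c : seq nat.
Local Notation k := (size c).
Local Notation L := (rowlen c).

Definition Rw (r : L.-tuple 'I_k) : seq nat := [seq nat_of_ord i | i <- r].

Definition phi (t : L.-tuple 'I_k * L.-tuple 'I_k) : seq nat :=
  [seq count_mem i (Rw t.2) | i <- iota 0 k].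

Lemma cnt_Rw (r : L.-tuple 'I_k) (i : 'I_k) : count_mem i r = count_mem (val i) (Rw r).
Proof. by rewrite /Rw count_map; apply: eq_count => z /=. Qed.

Lemma cnt_Rw_big (r : L.-tuple 'I_k) v : k <= v -> count_mem v (Rw r) = 0.
Proof.
move=> Hv; rewrite /Rw count_map; apply/eqP; rewrite -leqn0 leqNgt -has_count.
apply/hasPn => z _ /=; apply/eqP => Hz; have := ltn_ord z; lia.
Qed.

Lemma size_Rw (r : L.-tuple 'I_k) : size (Rw r) = L.
Proof. by rewrite size_map size_tuple. Qed.

Lemma all_Rw (r : L.-tuple 'I_k) : count (fun z => z < k) (Rw r) = L.
Proof.
rewrite /Rw count_map (@eq_count _ _ predT) ?count_predT ?size_tuple // => z /=.
exact: ltn_ord.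
Qed.

Lemma nth_Rw (r : L.-tuple 'I_k) j (Hj : j < L) : nth 0 (Rw r) j = tnth r (Ordinal Hj).
Proof.
by rewrite /Rw (nth_map (tnth r (Ordinal Hj))) ?size_tuple // [in RHS](tnth_nth (tnth r (Ordinal Hj))).
Qed.

Lemma sorted_Rw (r : L.-tuple 'I_k) :
  sorted (fun a b : 'I_k => (a <= b)%N) r = sorted leq (Rw r).
Proof. by rewrite /Rw sorted_map. Qed.

Lemma take_map_iota (f : nat -> nat) n m : n <= m ->
  take n [seq f i | i <- iota 0 m] = [seq f i | i <- iota 0 n].
Proof. by move=> H; rewrite -map_take take_iota (minn_idPl H). Qed.

Lemma sumn_take_cnt (R : seq nat) (x : seq nat) n :
  size x = k -> n <= k -> (forall i, i < k -> count_mem i R = nth 0 x i) ->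
  sumn (take n x) = count (fun z => z < n) R.
Proof.
move=> Hx Hn H; rewrite -cnt_sum.
have -> : take n x = [seq nth 0 x i | i <- iota 0 n].
  by rewrite -{1}(mkseq_nth 0 x) Hx; exact: take_map_iota.
congr sumn; apply/eq_in_map => i; rewrite mem_iota add0n => /andP[_ Hi].
by rewrite H //; apply: leq_trans Hn.
Qed.

Lemma claimA t : is_tableau t -> valid c (phi t) 0 0 L.
Proof.
case: t => r1 r2 /and4P[S1 S2 /forallP Hc /forallP Hcnt].
set y := [seq count_mem i (Rw r1) | i <- iota 0 k].
have Hx : size (phi (r1, r2)) = k by rewrite size_map size_iota.
have Hy : size y = k by rewrite size_map size_iota.
have Hxi : forall i, i < k -> count_mem i (Rw r2) = nth 0 (phi (r1, r2)) i.
  by move=> i Hi; rewrite /phi (nth_map 0) ?size_iota // nth_iota.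
have Hyi : forall i, i < k -> count_mem i (Rw r1) = nth 0 y i.
  by move=> i Hi; rewrite /y (nth_map 0) ?size_iota // nth_iota.
apply/(valid_char (y := y)) => //.
  move=> i; case: (ltnP i k) => Hi.
    rewrite -Hxi // -Hyi //; have := Hcnt (Ordinal Hi); rewrite !cnt_Rw /=.
    by move/eqP; lia.
  by rewrite !nth_default ?Hx ?Hy.
split.
- move=> v; rewrite Hx => Hv; rewrite !add0n.
  rewrite (sumn_take_cnt (R := Rw r2)) // (sumn_take_cnt (R := Rw r1)) //; last exact: ltnW.
  have := @strict1 (Rw r1) (Rw r2) _ _ v; rewrite !size_Rw; apply => //.
  move=> j Hj; rewrite !(nth_Rw _ Hj); exact: Hc.
- by rewrite add0n -(take_size y) Hy (sumn_take_cnt (R := Rw r1)) // all_Rw.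
- by rewrite add0n -(take_size (phi _)) Hx (sumn_take_cnt (R := Rw r2)) // all_Rw.
Qed.
Lemma Rw_eq (r r' : L.-tuple 'I_k) :
  sorted (fun a b : 'I_k => (a <= b)%N) r -> sorted (fun a b : 'I_k => (a <= b)%N) r' ->
  (forall i, i < k -> count_mem i (Rw r) = count_mem i (Rw r')) -> r = r'.
Proof.
rewrite !sorted_Rw => S S' H.
have E : Rw r = Rw r'.
  apply: (sorted_eq leq_trans anti_leq S S').
  apply/allP => v _; apply/eqP; case: (ltnP v k) => Hv; first exact: H.
  by rewrite !cnt_Rw_big.
by apply: val_inj; apply: (inj_map val_inj).
Qed.

Lemma claimB : {in [pred t | is_tableau t] &, injective phi}.
Proof.
move=> [r1 r2] [r1' r2']; rewrite !inE.
move=> /and4P[S1 S2 _ /forallP Hcnt] /and4P[S1' S2' _ /forallP Hcnt'] E.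
have H2 : forall i, i < k -> count_mem i (Rw r2) = count_mem i (Rw r2').
  move=> i Hi; have := congr1 (fun s => nth 0 s i) E.
  by rewrite /phi /= !(nth_map 0) ?size_iota // nth_iota.
have H1 : forall i, i < k -> count_mem i (Rw r1) = count_mem i (Rw r1').
  move=> i Hi; have := Hcnt (Ordinal Hi); have := Hcnt' (Ordinal Hi).
  rewrite !cnt_Rw /= => /eqP A /eqP B; move: (H2 i Hi) => E'; rewrite E' in B; apply: (@addIn (count_mem i (Rw r2'))); by rewrite B A.
by rewrite (Rw_eq S1 S1' H1) (Rw_eq S2 S2' H2).
Qed.

Lemma mk_tuple (R : seq nat) : all (fun z => z < k) R -> size R = L ->
  {r : L.-tuple 'I_k | Rw r = R}.
Proof.
move=> HA HS.
have Hsz : size (pmap (insub : nat -> option 'I_k) R) == L.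
  by rewrite size_pmap_sub -HS; apply/eqP; rewrite -[in RHS]count_predT; apply: eq_in_count => z /(allP HA).
exists (Tuple Hsz); rewrite /Rw /=.
rewrite (pmap_filter (@insubK _ _ _)); apply/all_filterP.
by apply: sub_all HA => z; rewrite /= isSome_insub.
Qed.

Lemma claimC x : valid c x 0 0 L -> exists2 t, is_tableau t & phi t = x.
Proof.
move=> Hv; have [Hsx Hle] := valid_le Hv.
set y := [seq nth 0 c i - nth 0 x i | i <- iota 0 k].
have Hsy : size y = k by rewrite size_map size_iota.
have Hsum : forall i, nth 0 x i + nth 0 y i = nth 0 c i.
  move=> i; case: (ltnP i k) => Hi.
    by rewrite /y (nth_map 0) ?size_iota // nth_iota // add0n subnKC.
  by rewrite !nth_default ?Hsx ?Hsy.
have [HP Hy Hx] := (valid_char 0 0 L Hsx Hsy Hsum).1 Hv.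
rewrite add0n in Hx Hy.
set R2 := row (nth 0 x) k; set R1 := row (nth 0 y) k.
have C2 : forall i, i < k -> count_mem i R2 = nth 0 x i by move=> i Hi; rewrite row_count Hi.
have C1 : forall i, i < k -> count_mem i R1 = nth 0 y i by move=> i Hi; rewrite row_count Hi.
have Hk2 : count (fun z => z < k) R2 = L by rewrite -(sumn_take_cnt Hsx) // take_oversize ?Hsx.
have Hk1 : count (fun z => z < k) R1 = L by rewrite -(sumn_take_cnt Hsy) // take_oversize ?Hsy.
have A2 : all (fun z => z < k) R2 by apply: row_all.
have A1 : all (fun z => z < k) R1 by apply: row_all.
have Hs2 : size R2 = L by rewrite -Hk2 -[size R2]count_predT; apply/esym; apply: eq_in_count => z /(allP A2).
have Hs1 : size R1 = L by rewrite -Hk1 -[size R1]count_predT; apply/esym; apply: eq_in_count => z /(allP A1).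
have [r1 Hr1] := mk_tuple A1 Hs1.
have [r2 Hr2] := mk_tuple A2 Hs2.
exists (r1, r2); last first.
  rewrite /phi /= Hr2 -[RHS](mkseq_nth 0 x) Hsx; apply/eq_in_map => i.
  by rewrite mem_iota add0n => /andP[_ Hi]; apply: C2.
apply/and4P; split.
- by rewrite sorted_Rw Hr1; apply: row_sorted.
- by rewrite sorted_Rw Hr2; apply: row_sorted.
- apply/forallP => -[j Hj]; rewrite -!(nth_Rw _ Hj) Hr1 Hr2.
  apply: (strict2 (row_sorted _ _) (row_sorted _ _)); rewrite ?Hs1 ?Hs2 //.
  move=> v; case: (ltnP v k) => Hvk.
    rewrite (@eq_count _ _ (fun z => z < v.+1)); last by move=> z /=; rewrite ltnS.
    rewrite -(sumn_take_cnt Hsx) // -(sumn_take_cnt Hsy) //; last exact: ltnW.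
    by have := HP v; rewrite Hsx !add0n; apply.
  apply: (@leq_trans L).
    by rewrite -Hs2 -[size R2]count_predT; apply: sub_count => z.
  rewrite -Hk1; apply: sub_count => z /=; lia.
- by apply/forallP => i; have Hi := ltn_ord i; rewrite !cnt_Rw Hr1 Hr2 (C1 _ Hi) (C2 _ Hi) addnC Hsum eqxx.
Qed.
Lemma K_gen : K c = size (gen c 0 0 L).
Proof.
rewrite /K cardE -(size_map phi).
apply: perm_size; apply: uniq_perm.
- rewrite map_inj_in_uniq ?enum_uniq // => t t' Ht Ht'.
  by apply: claimB; rewrite -mem_enum.
- exact: uniq_gen.
- move=> s; rewrite mem_gen; apply/mapP/idP.
  + by move=> [t Ht ->]; apply: claimA; rewrite mem_enum in Ht.
  + by move=> /claimC [t Ht <-]; exists t => //; rewrite mem_enum.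
Qed.
End Bij.

Fixpoint P (m i j : nat) : nat :=
  if m is m'.+1 then P m' i.+1 j + (if i is i'.+1 then P m' i j + P m' i' j else 0)
  else (i == j).

Lemma gen_nil_size a b L : size (gen [::] a b L) = (a == L) && (b == L).
Proof. by rewrite /=; case: ifP. Qed.

Lemma gen_cons_size ci c a b L : size (gen (ci :: c) a b L) =
  sumn [seq size (gen c (a + (ci - x)) (b + x) L) | x <- [seq x <- iota 0 ci.+1 | b + x <= a]].
Proof. exact: size_allpairs_dep. Qed.

Lemma gen2_size c a b L : size (gen (2 :: c) a b L) =
  (if b <= a then size (gen c (a + 2) b L) else 0) +
  (if b + 1 <= a then size (gen c (a + 1) (b + 1) L) else 0) +
  (if b + 2 <= a then size (gen c a (b + 2) L) else 0).
Proof.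
rewrite gen_cons_size /= addn0.
have E1 : 2 - 1 = 1 by []. have E2 : 2 - 0 = 2 by [].
case: ifP => H0; case: ifP => H1; case: ifP => H2 /=; rewrite ?E1 ?E2 ?subnn ?addn0 //; lia.
Qed.

Lemma sumn_filter (f : nat -> nat) (p : pred nat) s :
  sumn [seq f x | x <- s & p x] = sumn [seq p x * f x | x <- s].
Proof. by elim: s => //= x s IH; case: (p x) => /=; rewrite IH ?mul1n. Qed.

Lemma gen_size ci c a b L : size (gen (ci :: c) a b L) =
  sumn [seq (b + x <= a) * size (gen c (a + (ci - x)) (b + x) L) | x <- iota 0 ci.+1].
Proof. by rewrite gen_cons_size sumn_filter. Qed.

Lemma sumn_eq_iota (v N C : nat) :
  sumn [seq (x == v) * C | x <- iota 0 N] = (v < N) * C.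
Proof.
elim: N => [|N IH] //.
rewrite -addn1 iotaD map_cat sumn_cat IH /= add0n addn0 addn1.
case: (ltngtP v N) => H /=;
  [have -> : (v < N.+1) = true by lia | have -> : (v < N.+1) = false by lia
  | have -> : (v < N.+1) = true by lia]; by rewrite ?mul0n ?mul1n ?addn0.
Qed.

Lemma gen_last n a b L : size (gen [:: n] a b L) =
  [&& b <= L, L <= a, L - b <= n & a + n + b == L + L].
Proof.
rewrite gen_size.
set C := [&& b <= L, L <= a, L - b <= n & a + n + b == L + L].
have E : forall x, x \in iota 0 n.+1 ->
   (b + x <= a) * size (gen [::] (a + (n - x)) (b + x) L) = (x == L - b) * C.
  move=> x; rewrite mem_iota add0n ltnS => /andP[_ Hx].
  rewrite gen_nil_size /C.
  case: (x == L - b) / eqP => H2; last first.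
    rewrite mul0n; case: (b + x == L) / eqP => H4; [lia | by rewrite andbF muln0].
  rewrite mul1n mulnb; congr nat_of_bool; apply/idP/idP.
    move=> /andP[H1 /andP[/eqP H3 /eqP H4]].
    apply/and4P; split; [lia|lia|lia|apply/eqP; lia].
  move=> /and4P[H5 H6 H7 /eqP H8].
  apply/andP; split; [lia|apply/andP; split; apply/eqP; lia].
rewrite (_ : [seq _ | x <- iota 0 n.+1] = [seq (x == L - b) * C | x <- iota 0 n.+1]); last exact/eq_in_map.
rewrite sumn_eq_iota.
case: (L - b < n.+1) / idP => H; first by rewrite mul1n.
rewrite mul0n /C; case: (b <= L) / idP => H5 //=; case: (L <= a) / idP => H6 //=.
by case: (L - b <= n) / idP => H7 //=; lia.
Qed.

Lemma gen4_base i b L :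
  size (gen [:: 4] (b + 2 * i) b L) = (b + i + 2 == L) * (i == 2).
Proof.
rewrite gen_last mulnb; congr nat_of_bool; apply/idP/idP.
  move=> /and4P[H1 H2 H3 /eqP H4]; apply/andP; split; apply/eqP; lia.
move=> /andP[/eqP H1 /eqP H2]; apply/and4P; split; [lia|lia|lia|apply/eqP; lia].
Qed.

Lemma gen11_base i b L :
  size (gen [:: 1; 1] (b + 2 * i) b L) = (b + i + 1 == L) * ((i == 0) + (i == 1)).
Proof.
rewrite gen_size /= !gen_last addn0 subn0 subnn !addn0 mulnDr.
congr (_ + _).
  rewrite !mulnb; congr nat_of_bool; apply/idP/idP.
    move=> /andP[_ /and4P[H1 H2 H3 /eqP H4]]; apply/andP; split; apply/eqP; lia.
  move=> /andP[/eqP H1 /eqP H2]; apply/andP; split; [lia|apply/and4P; split; [lia|lia|lia|apply/eqP; lia]].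
rewrite !mulnb; congr nat_of_bool; apply/idP/idP.
  move=> /andP[_ /and4P[H1 H2 H3 /eqP H4]]; apply/andP; split; apply/eqP; lia.
move=> /andP[/eqP H1 /eqP H2]; apply/andP; split; [lia|apply/and4P; split; [lia|lia|lia|apply/eqP; lia]].
Qed.

Lemma gen4 m : forall i b L,
  size (gen (nseq m 2 ++ [:: 4]) (b + 2 * i) b L) = (b + i + m + 2 == L) * P m i 2.
Proof.
elim: m => [|m IH] i b L; first by rewrite /= gen4_base addn0.
rewrite [nseq _ _ ++ _]/= gen2_size.
have -> : b <= b + 2 * i by apply: leq_addr.
have -> : b + 2 * i + 2 = b + 2 * i.+1 by lia.
rewrite IH.
have -> : b + i.+1 + m + 2 = b + i + m.+1 + 2 by lia.
case: i => [|i].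
  have -> : (b + 1 <= b + 2 * 0) = false by lia.
  have -> : (b + 2 <= b + 2 * 0) = false by lia.
  by rewrite /= !addn0.
have -> : (b + 1 <= b + 2 * i.+1) = true by lia.
have -> : (b + 2 <= b + 2 * i.+1) = true by lia.
have -> : b + 2 * i.+1 + 1 = (b + 1) + 2 * i.+1 by lia.
have -> : b + 2 * i.+1 = (b + 2) + 2 * i by lia.
rewrite !IH.
have -> : b + 1 + i.+1 + m + 2 = b + i.+1 + m.+1 + 2 by lia.
have -> : b + 2 + i + m + 2 = b + i.+1 + m.+1 + 2 by lia.
rewrite /=; case: (_ == L) => /=; lia.
Qed.

Lemma gen11 m : forall i b L,
  size (gen (nseq m 2 ++ [:: 1; 1]) (b + 2 * i) b L) =
  (b + i + m + 1 == L) * (P m i 0 + P m i 1).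
Proof.
elim: m => [|m IH] i b L; first by rewrite /= gen11_base addn0.
rewrite [nseq _ _ ++ _]/= gen2_size.
have -> : b <= b + 2 * i by apply: leq_addr.
have -> : b + 2 * i + 2 = b + 2 * i.+1 by lia.
rewrite IH.
have -> : b + i.+1 + m + 1 = b + i + m.+1 + 1 by lia.
case: i => [|i].
  have -> : (b + 1 <= b + 2 * 0) = false by lia.
  have -> : (b + 2 <= b + 2 * 0) = false by lia.
  by rewrite /= !addn0.
have -> : (b + 1 <= b + 2 * i.+1) = true by lia.
have -> : (b + 2 <= b + 2 * i.+1) = true by lia.
have -> : b + 2 * i.+1 + 1 = (b + 1) + 2 * i.+1 by lia.
have -> : b + 2 * i.+1 = (b + 2) + 2 * i by lia.
rewrite !IH.
have -> : b + 1 + i.+1 + m + 1 = b + i.+1 + m.+1 + 1 by lia.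
have -> : b + 2 + i + m + 1 = b + i.+1 + m.+1 + 1 by lia.
rewrite /=; case: (_ == L) => /=; lia.
Qed.

Lemma K4 m : K (nseq m 2 ++ [:: 4]) = P m 0 2.
Proof.
rewrite K_gen.
have -> : rowlen (nseq m 2 ++ [:: 4]) = m + 2.
  by rewrite /rowlen sumn_cat sumn_nseq /=; lia.
have := gen4 m 0 0 (m + 2); rewrite !add0n muln0 eqxx mul1n => <-.
by [].
Qed.

Lemma K11 m : K (nseq m 2 ++ [:: 1; 1]) = P m 0 0 + P m 0 1.
Proof.
rewrite K_gen.
have -> : rowlen (nseq m 2 ++ [:: 1; 1]) = m + 1.
  by rewrite /rowlen sumn_cat sumn_nseq /=; lia.
have := gen11 m 0 0 (m + 1); rewrite !add0n muln0 eqxx mul1n => <-.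
by [].
Qed.

Lemma P_S m i j : P m.+1 i j = P m i.+1 j + (if i is i'.+1 then P m i j + P m i' j else 0).
Proof. by []. Qed.

Lemma P_last m : forall i j, P m.+1 i j =
  (if j is j'.+1 then P m i j' + P m i j else 0) + P m i j.+1.
Proof.
elim: m => [|m IH] i j.
  case: i => [|i]; case: j => [|j] /=; rewrite ?eqSS; try lia.
rewrite P_S; case: i => [|i]; rewrite [RHS]/= !IH; case: j => [|j]; lia.
Qed.

Section ZPart.
Local Unset Implicit Arguments.
Local Open Scope Z_scope.

Definition stepA (v : seq Z) : seq Z :=
  mkseq (fun h => (if h is h'.+1 then nth 0 v h' + nth 0 v h else 0) + nth 0 v h.+1) (size v).+1.
Fixpoint av (m : nat) : seq Z := if m is m'.+1 then stepA (av m') else [:: 1].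
Definition aZ m h := nth 0 (av m) h.

Definition stepT (v : seq Z) : seq Z :=
  mkseq (fun j => (if j is j'.+1 then nth 0 v j' else nth 0 v 1) + nth 0 v j + nth 0 v j.+1) (size v).+1.
Fixpoint tv (n : nat) : seq Z := if n is n'.+1 then stepT (tv n') else [:: 1].
Definition tZ n j := nth 0 (tv n) j.

Lemma size_av m : size (av m) = m.+1.
Proof. by elim: m => // m IH; rewrite -[av _]/(stepA _) /stepA size_mkseq IH. Qed.
Lemma size_tv m : size (tv m) = m.+1.
Proof. by elim: m => // m IH; rewrite -[tv _]/(stepT _) /stepT size_mkseq IH. Qed.

Lemma aZ_step m h : aZ m.+1 h = (if h is h'.+1 then aZ m h' + aZ m h else 0) + aZ m h.+1.
Proof.
rewrite /aZ /=; case: (ltnP h (size (av m)).+1) => H; first by rewrite nth_mkseq.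
rewrite nth_default ?size_mkseq // !(@nth_default _ _ (av m)); try (rewrite ?size_av in H *; lia).
by case: h H => [|h] H //=; rewrite nth_default //; rewrite size_av in H *; lia.
Qed.

Lemma tZ_step m j : tZ m.+1 j = (if j is j'.+1 then tZ m j' else tZ m 1) + tZ m j + tZ m j.+1.
Proof.
rewrite /tZ /=; case: (ltnP j (size (tv m)).+1) => H; first by rewrite nth_mkseq.
rewrite nth_default ?size_mkseq //; rewrite size_tv in H.
case: j H => [|j] H; first lia.
rewrite !nth_default ?size_tv //; lia.
Qed.

Lemma aZ_P m h : aZ m h = Z.of_nat (P m 0 h).
Proof.
elim: m h => [|m IH] h.
  by case: h => [|[|h]] //=; rewrite /aZ /= nth_nil.
case: h => [|h]; rewrite aZ_step P_last !IH; lia.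
Qed.

Definition RR m h := (if h is h'.+1 then tZ m h' else tZ m 1) + tZ m h - tZ m h.+1 - tZ m h.+2.

Lemma S_rel m : forall h, aZ m.+1 h + aZ m h = RR m h.
Proof.
elim: m => [|m IH] h.
  by case: h => [|[|h]]; rewrite /RR /aZ /tZ /= ?nth_nil.
case: h => [|[|h]].
- move: (IH 0%N) (IH 1%N) (IH 2%N); rewrite /RR !aZ_step !tZ_step /=; lia.
- move: (IH 0%N) (IH 1%N) (IH 2%N); rewrite /RR !aZ_step !tZ_step /=; lia.
- move: (IH h) (IH h.+1) (IH h.+2) (IH h.+3); rewrite /RR !aZ_step !tZ_step /=.
  case: h => [|h] /=; lia.
Qed.

Definition Bf (n j : nat) : Z :=
  (Z.of_nat n + Z.of_nat j + 2) * tZ n j.+2 + (Z.of_nat j + 1) * tZ n j.+1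
  - (Z.of_nat n - Z.of_nat j) * tZ n j.

Lemma B_rel n : forall j, Bf n j = 0.
Proof.
elim: n => [|n IH] j.
  by case: j => [|[|j]]; rewrite /Bf /tZ /= ?nth_nil.
case: j => [|j].
  move: (IH O) (IH (S O)); rewrite /Bf !tZ_step; cbv beta iota.
  rewrite ?Nat2Z.inj_succ ?Nat2Z.inj_0; unfold Z.succ => H0 H1.
  match goal with H0 : ?A = 0, H1 : ?B = 0 |- _ =>
    transitivity (A + B); [ring | rewrite H0 H1; reflexivity] end.
move: (IH j) (IH j.+1) (IH j.+2); rewrite /Bf !tZ_step; cbv beta iota.
rewrite ?Nat2Z.inj_succ; unfold Z.succ => H0 H1 H2.
match goal with H0 : ?A = 0, H1 : ?B = 0, H2 : ?C = 0 |- _ =>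
  transitivity (A + B + C); [ring | rewrite H0 H1 H2; reflexivity] end.
Qed.

Lemma tZ_nonneg n j : 0 <= tZ n j.
Proof.
elim: n j => [|n IH] j; first by case: j => [|j]; rewrite /tZ /= ?nth_nil; lia.
rewrite tZ_step; case: j => [|j]; cbv beta iota.
  by have := IH O; have := IH 1%nat; lia.
by have := IH j; have := IH j.+1; have := IH j.+2; lia.
Qed.

Lemma tZ_0 n : 1 <= tZ n 0.
Proof.
elim: n => [|n IH]; first by rewrite /tZ.
rewrite tZ_step; cbv beta iota; have := tZ_nonneg n 1; lia.
Qed.

Lemma tZ_1 n : 1 <= tZ n.+1 1.
Proof.
rewrite tZ_step; cbv beta iota; have := tZ_0 n; have := tZ_nonneg n 1; have := tZ_nonneg n 2; lia.
Qed.

Definition D m := aZ m 2 - aZ m 0 - aZ m 1.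

Lemma D_rec m : D m.+2 = D m + (2 * tZ m 3 - tZ m 1 - tZ m 5).
Proof.
have A0 := S_rel m O; have A1 := S_rel m 1%nat; have A2 := S_rel m 2%nat.
have B0 := S_rel m.+1 O; have B1 := S_rel m.+1 1%nat; have B2 := S_rel m.+1 2%nat.
move: A0 A1 A2 B0 B1 B2; rewrite /D /RR !tZ_step; cbv beta iota; lia.
Qed.

Lemma G_big (n : nat) : (18 <= n)%nat -> 0 < 2 * tZ n 3 - tZ n 1 - tZ n 5.
Proof.
move=> Hn.
have e1 := B_rel n O; have e2 := B_rel n 1%nat; have e3 := B_rel n 2%nat; have e4 := B_rel n 3%nat.
rewrite /Bf in e1 e2 e3 e4.
have t0p := tZ_0 n.
have t1p : 1 <= tZ n 1 by destruct n as [|n']; [lia | apply tZ_1].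
set N := Z.of_nat n in e1 e2 e3 e4.
have HN : 18 <= N by rewrite /N; lia.
set t0 := tZ n 0 in e1 t0p *; set t1 := tZ n 1 in e1 e2 t1p *; set t2 := tZ n 2 in e1 e2 e3 *.
set t3 := tZ n 3 in e2 e3 e4 *; set t4 := tZ n 4 in e3 e4 *; set t5 := tZ n 5 in e4 *.
change (Z.of_nat 0) with 0 in e1.
change (Z.of_nat 1) with 1 in e2.
change (Z.of_nat 2) with 2 in e3.
change (Z.of_nat 3) with 3 in e4.
have E : (N + 2) * (N + 3) * (N + 4) * (N + 5) * (2 * t3 - t1 - t5) =
   (2 * N ^ 3 - 30 * N ^ 2 - 104 * N) * t0 + (4 * N ^ 3 - 18 * N ^ 2 - 118 * N - 96) * t1.
  match goal with
  | e1 : ?A1 = 0, e2 : ?A2 = 0, e3 : ?A3 = 0, e4 : ?A4 = 0 |- ?L = ?R =>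
    assert (F : L - R = (2 * N ^ 2 - 30 * N - 104) * A1 + (N ^ 3 + 19 * N ^ 2 + 74 * N + 80) * A2
       + (4 * N ^ 2 + 20 * N + 24) * A3 - (N ^ 3 + 9 * N ^ 2 + 26 * N + 24) * A4);
    [ring | rewrite e1 e2 e3 e4 in F; lia]
  end.
have Ha : 0 <= 2 * N ^ 3 - 30 * N ^ 2 - 104 * N.
  have : 0 <= N ^ 2 - 15 * N - 52 by nia.
  nia.
have Hb : 0 < 4 * N ^ 3 - 18 * N ^ 2 - 118 * N - 96 by nia.
have Hpos : 0 < (2 * N ^ 3 - 30 * N ^ 2 - 104 * N) * t0 + (4 * N ^ 3 - 18 * N ^ 2 - 118 * N - 96) * t1 by nia.
rewrite -E in Hpos.
have Hd : 0 < (N + 2) * (N + 3) * (N + 4) * (N + 5) by nia.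
nia.
Qed.

Lemma G_pos (n : nat) : (14 <= n)%nat -> 0 < 2 * tZ n 3 - tZ n 1 - tZ n 5.
Proof.
move=> Hn; case: (leqP 18 n) => H; first exact: G_big.
have : n = 14%nat \/ n = 15%nat \/ n = 16%nat \/ n = 17%nat by lia.
by case=> [->|[->|[->|->]]]; vm_compute.
Qed.

Lemma D_pos k : 0 < D (14 + k) /\ 0 < D (15 + k).
Proof.
elim: k => [|k [IH1 IH2]]; first by split; vm_compute.
split; first by [].
have -> : (15 + k.+1 = (14 + k).+2)%nat by lia.
rewrite D_rec; have := G_pos (14 + k) (leq_addr _ _); lia.
Qed.

Lemma D_neg m : (1 <= m)%nat -> (m < 14)%nat -> D m < 0.
Proof.
move=> H1 H2.
do 14 (destruct m as [|m]; [ first [ by [] | by vm_compute | lia ] | ]).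
lia.
Qed.

End ZPart.

Lemma D_K m : D m = Z.sub (Z.of_nat (K (nseq m 2 ++ [:: 4]))) (Z.of_nat (K (nseq m 2 ++ [:: 1; 1]))).
Proof. rewrite K4 K11 /D !aZ_P Nat2Z.inj_add; ring. Qed.

Theorem lemma3p4 (m : nat) : 1 <= m ->
  [/\ K (nseq m 2 ++ [:: 4]) <> K (nseq m 2 ++ [:: 1; 1]),
      m < 14 -> K (nseq m 2 ++ [:: 4]) < K (nseq m 2 ++ [:: 1; 1]) &
      14 <= m -> K (nseq m 2 ++ [:: 4]) > K (nseq m 2 ++ [:: 1; 1])].
Proof.
move=> Hm; have E := D_K m.
case: (ltnP m 14) => H.
  have HD := D_neg m Hm H; rewrite E in HD.
  split; [lia | move=> _; lia | lia].
have [HD _] := D_pos (m - 14).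
rewrite (_ : (14 + (m - 14))%nat = m) in HD; last lia.
rewrite E in HD.
split; [lia | lia | move=> _; lia].
Qed.
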